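(* Let $A,B\subset\mathbb{R}^n$ be set-germs at $0$ with $0\in\overline{A}\cap\overline{B}$, and let $h:(\mathbb{R}^n,0)\to(\mathbb{R}^n,0)$ be a bi-Lipschitz homeomorphism germ. Suppose that $A$ or $B$ satisfies condition (SSP), and that $h(A)$ or $h(B)$ satisfies condition (SSP). Then $A$ and $B$ are weakly transverse at $0$ if and only if $h(A)$ and $h(B)$ are weakly transverse at $0$.
   Context: For a set-germ $A\subset\mathbb{R}^n$ at $0$ with $0\in\overline A$, the direction set is $D(A)=\{a\in S^{n-1}:\exists\, x_i\in A\setminus\{0\},\ x_i\to0,\ x_i/\|x_i\|\to a\}$, where $S^{n-1}$ is the unit sphere. For sequences, $\|u_m\|\ll\|v_m\|,\|w_m\|$ means $\|u_m\|/\|v_m\|\to0$ and $\|u_m\|/\|w_m\|\to0$. A set-germ $A$ with $0\in\overline A$ satisfies condition (SSP) if for every sequence $a_m\in\mathbb{R}^n$ tending to $0$ with $\lim a_m/\|a_m\|\in D(A)$ there is a sequence $b_m\in A$ with $\|a_m-b_m\|\ll\|a_m\|,\|b_m\|$. $A$ and $B$ are weakly transverse at $0$ if $D(A)\cap D(B)=\emptyset$. A bi-Lipschitz homeomorphism germ $h$ is a homeomorphism germ with $h(0)=0$ and constants $0<K_1\le K_2$ with $K_1\|x-y\|\le\|h(x)-h(y)\|\le K_2\|x-y\|$ near $0$. *)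

(* Defs.v *)
From HB Require Import structures.
From mathcomp Require Import all_boot all_order all_algebra.
From mathcomp Require Import classical_sets reals.
Set Implicit Arguments. Unset Strict Implicit. Unset Printing Implicit Defensive.
Import Order.TTheory GRing.Theory Num.Theory.
Local Open Scope ring_scope.
Local Open Scope classical_set_scope.

Section Defs.
Variables (R : realType) (n : nat).
Notation vec := 'rV[R]_n.

Definition enorm (x : vec) : R := Num.sqrt (\sum_(i < n) x ord0 i ^+ 2).

Definition dirv (x : vec) : vec := (enorm x)^-1 *: x.

Definition rseq_to0 (u : nat -> R) : Prop :=
  forall e : R, 0 < e -> exists N : nat, forall m, (N <= m)%N -> `|u m| < e.

Definition vseq_to (u : nat -> vec) (l : vec) : Prop :=
  forall e : R, 0 < e -> exists N : nat, forall m, (N <= m)%N -> enorm (u m - l) < e.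

Definition zero_in_closure (A : set vec) : Prop :=
  forall e : R, 0 < e -> exists x, A x /\ enorm x < e.

Definition dirset (A : set vec) : set vec :=
  [set a | enorm a = 1 /\
    exists x : nat -> vec, (forall m, A (x m) /\ x m != 0) /\
      vseq_to x 0 /\ vseq_to (fun m => dirv (x m)) a].

Definition SSP (A : set vec) : Prop :=
  forall a : nat -> vec, vseq_to a 0 ->
    (exists d, dirset A d /\ vseq_to (fun m => dirv (a m)) d) ->
    exists b : nat -> vec, (forall m, A (b m)) /\
      rseq_to0 (fun m => enorm (a m - b m) / enorm (a m)) /\
      rseq_to0 (fun m => enorm (a m - b m) / enorm (b m)).

Definition weakly_transverse (A B : set vec) : Prop :=
  dirset A `&` dirset B = set0.

(* h is a bi-Lipschitz homeomorphism germ at 0, realised on the open ball of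
   radius r: h 0 = 0, h is bi-Lipschitz on the ball, and h(ball) contains a
   neighbourhood of 0 (so h restricted to the ball is a homeomorphism onto an
   open neighbourhood of 0). *)
Definition biLipschitz_germ (h : vec -> vec) (r : R) : Prop :=
  0 < r /\ h 0 = 0 /\
  (exists K1 K2 : R, 0 < K1 /\ K1 <= K2 /\
     forall x y, enorm x < r -> enorm y < r ->
       K1 * enorm (x - y) <= enorm (h x - h y) /\
       enorm (h x - h y) <= K2 * enorm (x - y)) /\
  (exists s : R, 0 < s /\ forall y, enorm y < s -> exists x, enorm x < r /\ h x = y).

Definition germ_image (h : vec -> vec) (r : R) (A : set vec) : set vec :=
  h @` (A `&` [set x | enorm x < r]).

End Defs.

(* Main.v *)
Require Import Defs.
From HB Require Import structures.
From mathcomp Require Import all_boot all_order all_algebra.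
From mathcomp Require Import boolp classical_sets reals topology normedtype.
From mathcomp Require Import ring lra.
Import Order.TTheory GRing.Theory Num.Theory.
Local Open Scope ring_scope.
Import numFieldNormedType.Exports.
Local Open Scope classical_set_scope.
Set Implicit Arguments. Unset Strict Implicit.

Section Norm.
Variables (R : realType) (n : nat).
Notation vec := 'rV[R]_n.
Notation S x := (\sum_(i < n) (x : vec) ord0 i ^+ 2).

Lemma S_ge0 (x : vec) : 0 <= S x.
Proof. by apply: sumr_ge0 => i _; rewrite sqr_ge0. Qed.

Lemma enorm_ge0 (x : vec) : 0 <= enorm x.
Proof. exact: sqrtr_ge0. Qed.

Lemma enorm0 : enorm (0 : vec) = 0.
Proof. by rewrite /enorm big1 ?sqrtr0 // => i _; rewrite mxE expr0n. Qed.

Lemma enorm_eq0 (x : vec) : enorm x = 0 -> x = 0.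
Proof.
move=> /eqP; rewrite sqrtr_eq0 => H.
have H0 : S x = 0 by apply/eqP; rewrite eq_le H S_ge0.
apply/rowP => i; rewrite mxE.
have := psumr_eq0P (fun i _ => sqr_ge0 (x ord0 i)) H0 (i:=i) isT.
by move/eqP; rewrite sqrf_eq0 => /eqP; rewrite (ord1 ord0) => ->.
Qed.

Lemma enorm_gt0 (x : vec) : x != 0 -> 0 < enorm x.
Proof.
move=> x0; rewrite lt_neqAle enorm_ge0 andbT eq_sym; apply/eqP => /enorm_eq0.
by move/eqP: x0.
Qed.

Lemma enormN (x : vec) : enorm (- x) = enorm x.
Proof. by rewrite /enorm; congr Num.sqrt; apply: eq_bigr => i _; rewrite mxE sqrrN. Qed.

Lemma enormZ (k : R) (x : vec) : enorm (k *: x) = `|k| * enorm x.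
Proof.
rewrite /enorm -sqrtr_sqr -sqrtrM ?sqr_ge0 // mulr_sumr; congr Num.sqrt.
by apply: eq_bigr => i _; rewrite mxE exprMn.
Qed.

Lemma sum_expand (t : R) (x y : vec) :
  \sum_(i < n) (t * x ord0 i + y ord0 i) ^+ 2 =
  t ^+ 2 * S x + 2 * t * (\sum_(i < n) x ord0 i * y ord0 i) + S y.
Proof.
rewrite !mulr_sumr -!big_split /=; apply: eq_bigr => i _; ring.
Qed.

Lemma cauchy_schwarz (x y : vec) :
  (\sum_(i < n) x ord0 i * y ord0 i) ^+ 2 <= S x * S y.
Proof.
set D := \sum_(i < n) _.
have [Sx0|Sxn0] := eqVneq (S x) 0.
  have D0 : D = 0.
    rewrite /D big1 // => i _.
    have := psumr_eq0P (fun i _ => sqr_ge0 (x ord0 i)) Sx0 (i:=i) isT.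
    by move/eqP; rewrite sqrf_eq0 => /eqP ->; rewrite mul0r.
  by rewrite D0 Sx0 expr0n mul0r.
have Sxp : 0 < S x by rewrite lt_neqAle eq_sym Sxn0 S_ge0.
set q := - (D / S x).
have H := S_ge0 (q *: x + y).
have E : S (q *: x + y) = \sum_(i < n) (q * x ord0 i + y ord0 i) ^+ 2.
  by apply: eq_bigr => i _; rewrite !mxE.
rewrite E sum_expand -/D in H.
have Dq : D = - q * S x by rewrite /q opprK divfK.
rewrite Dq in H *.
have := S_ge0 y; nra.
Qed.

Lemma enormD (x y : vec) : enorm (x + y) <= enorm x + enorm y.
Proof.
have E : S (x + y) = \sum_(i < n) (1 * x ord0 i + y ord0 i) ^+ 2.
  by apply: eq_bigr => i _; rewrite !mxE mul1r.
rewrite -[enorm x + enorm y]ger0_norm ?addr_ge0 ?enorm_ge0 //.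
rewrite -sqrtr_sqr /enorm ler_sqrt ?sqr_ge0 // E sum_expand.
set D := \sum_(i < n) x ord0 i * y ord0 i.
have CS := cauchy_schwarz x y.
have hx := sqr_sqrtr (S_ge0 x); have hy := sqr_sqrtr (S_ge0 y).
have gx := sqrtr_ge0 (S x); have gy := sqrtr_ge0 (S y).
have HD : D <= Num.sqrt (S x) * Num.sqrt (S y).
  rewrite -sqrtrM ?S_ge0 // (le_trans (ler_norm D)) //.
  rewrite -sqrtr_sqr ler_sqrt ?mulr_ge0 ?S_ge0 //.
rewrite expr1n mul1r mulr1; nra.
Qed.

Lemma enormB_sym (x y : vec) : enorm (x - y) = enorm (y - x).
Proof. by rewrite -enormN opprB. Qed.

Lemma enorm_rev (x y : vec) : `|enorm x - enorm y| <= enorm (x - y).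
Proof.
have h1 : enorm x <= enorm (x - y) + enorm y.
  by rewrite -{1}(subrK y x) enormD.
have h2 : enorm y <= enorm (x - y) + enorm x.
  by rewrite -{1}(subrK x y) enormB_sym enormD.
rewrite ler_norml; apply/andP; split; lra.
Qed.

Lemma coord_le (x : vec) i : `|x ord0 i| <= enorm x.
Proof.
rewrite -sqrtr_sqr /enorm ler_sqrt ?S_ge0 // (bigD1 i) //= lerDl.
by apply: sumr_ge0 => j _; rewrite sqr_ge0.
Qed.

Lemma enorm_coord_bound (x : vec) (e : R) : 0 <= e ->
  (forall i, `|x ord0 i| <= e) -> enorm x <= e * n%:R.
Proof.
move=> e0 H.
rewrite -[e * _]ger0_norm ?mulr_ge0 ?ler0n // -sqrtr_sqr /enorm ler_sqrt ?sqr_ge0 //.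
apply: (@le_trans _ _ (\sum_(i < n) e ^+ 2)).
  apply: ler_sum => i _; rewrite -real_normK ?num_real //.
  by rewrite lerXn2r ?nnegrE ?normr_ge0.
rewrite sumr_const card_ord exprMn -[e^+2 *+ n]mulr_natr; apply: ler_wpM2l; first exact: sqr_ge0.
rewrite expr2 -natrM ler_nat; by case: (n) => // m; rewrite leq_pmull.
Qed.

Lemma enorm_dirv (x : vec) : x != 0 -> enorm (dirv x) = 1.
Proof.
move=> x0; have p := enorm_gt0 x0.
by rewrite /dirv enormZ ger0_norm ?invr_ge0 ?enorm_ge0 // mulVf // gt_eqF.
Qed.

Lemma enorm_dirv_le1 (x : vec) : enorm (dirv x) <= 1.
Proof.
have [->|x0] := eqVneq x 0; last by rewrite enorm_dirv.
by rewrite /dirv scaler0 enorm0.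
Qed.

Lemma dirv_diff (p q : vec) : q != 0 ->
  enorm (dirv p - dirv q) <= 2 * enorm (p - q) / enorm q.
Proof.
move=> q0; have bp := enorm_gt0 q0.
set a := enorm p; set b := enorm q.
have E : dirv p - dirv q = b^-1 *: (p - q) + (a^-1 - b^-1) *: p.
  by rewrite /dirv -/a -/b scalerBr scalerBl [RHS]addrC addrA subrK.
rewrite E; apply: le_trans (enormD _ _) _.
rewrite !enormZ ger0_norm ?invr_ge0 ?enorm_ge0 //.
have rv := enorm_rev p q; rewrite -/a -/b in rv.
have ha : `|a^-1 - b^-1| * a <= enorm (p - q) / b.
  have [a0|an0] := eqVneq a 0.
    by rewrite a0 mulr0 divr_ge0 ?enorm_ge0 // ltW.
  have -> : `|a^-1 - b^-1| * a = `|a^-1 - b^-1| * `|a|.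
    by rewrite (ger0_norm (enorm_ge0 p)).
  rewrite -normrM (_ : (a^-1 - b^-1) * a = (b - a) / b); last first.
    by field; apply/andP; split=> //; rewrite gt_eqF.
  rewrite normrM [`|b^-1|]ger0_norm; last by rewrite invr_ge0 ltW.
  by rewrite ler_pM2r ?invr_gt0 // distrC.
rewrite -/a; apply: le_trans (lerD (lexx _) ha) _.
by rewrite mulrC; lra.
Qed.

End Norm.
Section Clu.
Variables (R : realType) (n : nat).
Notation vec := 'rV[R]_n.

Lemma cluster_ex (u : nat -> vec) (M : R) : (forall m i, `|u m ord0 i| <= M) ->
  exists c : vec, forall e : R, 0 < e -> forall N, exists m, (N <= m)%N /\
     forall i, `|u m ord0 i - c ord0 i| < e.
Proof.
move=> Hb.
have K := @rV_compact R n (fun=> `[- M, M]%classic) (fun _ => @segment_compact R _ _).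
have FA : (fmap u \oo) [set v : vec | forall i, `[- M, M]%classic (v ord0 i)].
  exists 0%N => // m _ /= i; rewrite in_itv /= -ler_norml; exact: Hb.
have [c [_ Cc]] := K (fmap u \oo) _ FA.
exists c => e e0 N.
have FB : (fmap u \oo) [set v | exists m, (N <= m)%N /\ v = u m].
  by exists N => // m Nm; exists m.
have [v [[m [Nm ->]] Hv]] := Cc _ (ball c e) FB (nbhsx_ballx c e e0).
exists m; split => // i.
have [_ /(_ ord0 i)] := Hv.
by rewrite /ball /= distrC.
Qed.
End Clu.

Section Main.
Variables (R : realType) (n : nat).
Notation vec := 'rV[R]_n.

Lemma lim_eq (a b : R) : (forall e, 0 < e -> `|a - b| < e) -> a = b.
Proof.
move=> H; apply/eqP; rewrite -subr_eq0; apply/negPn/negP => ne.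
have p : 0 < `|a - b| by rewrite normr_gt0.
by have := H _ p; rewrite ltxx.
Qed.

Lemma small_pos (a b : R) : 0 < a -> 0 < b -> exists s, 0 < s /\ s <= a /\ s <= b.
Proof.
move=> a0 b0; exists (Num.min a b); split; first by rewrite lt_min a0 b0.
by rewrite !ge_min !lexx ?orbT.
Qed.

Lemma inv_small (e : R) : 0 < e -> exists N, forall k, (N <= k)%N -> (k.+1%:R)^-1 < e.
Proof.
move=> e0; exists (Num.Def.archi_bound e^-1) => k Nk.
rewrite invf_plt ?posrE ?ltr0Sn //.
apply: (lt_le_trans (archi_boundP _)); first by rewrite invr_ge0 ltW.
by rewrite ler_nat; apply: leq_trans Nk _.
Qed.

Lemma dirset_of (S : set vec) c : enorm c = 1 ->
  (forall e, 0 < e -> exists x, S x /\ x != 0 /\ enorm x < e /\ enorm (dirv x - c) < e) ->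
  dirset S c.
Proof.
move=> c1 H; split => //.
have /choice [x Hx] : forall k : nat, exists x, S x /\ x != 0 /\
    enorm x < (k.+1%:R)^-1 /\ enorm (dirv x - c) < (k.+1%:R)^-1.
  by move=> k; apply: H; rewrite invr_gt0 ltr0Sn.
exists x; split; first by move=> m; have [? [? _]] := Hx m.
split.
  move=> e e0; have [N HN] := inv_small e0; exists N => m Nm; rewrite subr0.
  by have [_ [_ [h _]]] := Hx m; exact: lt_trans h (HN m Nm).
move=> e e0; have [N HN] := inv_small e0; exists N => m Nm.
by have [_ [_ [_ h]]] := Hx m; exact: lt_trans h (HN m Nm).
Qed.

Lemma transfer (A B A2 B2 : set vec) (P : vec -> vec -> Prop) (K1 K2 s : R) :
  0 < K1 -> 0 < K2 -> 0 < s -> P 0 0 ->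
  (forall x y z w, P x z -> P y w ->
     K1 * enorm (x - y) <= enorm (z - w) /\ enorm (z - w) <= K2 * enorm (x - y)) ->
  (forall x, A x -> enorm x < s -> exists z, A2 z /\ P x z) ->
  (forall x, B x -> enorm x < s -> exists z, B2 z /\ P x z) ->
  SSP A -> (exists d, dirset A d /\ dirset B d) ->
  exists c, dirset A2 c /\ dirset B2 c.
Proof.
move=> K10 K20 s0 P00 HP HA HB ssp [d [dA [_ [y [yB [y0 yd]]]]]].
have [b [bA [rho _]]] := ssp y y0 (ex_intro _ d (conj dA yd)).
have /choice [z Hz] : forall m, exists z0, enorm (y m) < s -> B2 z0 /\ P (y m) z0.
  move=> m; have [ys|ys] := pselect (enorm (y m) < s).
    by have [z [? ?]] := HB _ (proj1 (yB m)) ys; exists z.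
  by exists 0.
have bnd : forall x1 z1, P x1 z1 -> K1 * enorm x1 <= enorm z1 /\ enorm z1 <= K2 * enorm x1.
  by move=> x1 z1 Pxz; have := HP _ _ _ _ Pxz P00; rewrite !subr0.
have [c Hc] := @cluster_ex R n (fun m => dirv (z m)) 1
   (fun m i => le_trans (coord_le _ _) (enorm_dirv_le1 _)).
have Hc' : forall e, 0 < e -> forall N, exists m, (N <= m)%N /\ enorm (dirv (z m) - c) < e.
  move=> e e0 N.
  have n0 : (0 : R) <= n%:R by rewrite ler0n.
  have e'0 : 0 < e / (n%:R + 1) by rewrite divr_gt0 // ltr_wpDl.
  have [m [Nm Hm]] := Hc _ e'0 N; exists m; split => //.
  apply: le_lt_trans (enorm_coord_bound (x := dirv (z m) - c) (ltW e'0) _) _.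
    by move=> i; rewrite [X in `|X|]mxE [X in _ + X]mxE; exact: ltW (Hm i).
  rewrite mulrAC ltr_pdivrMr ?ltr_wpDl //; nra.
have key : forall e, 0 < e -> exists zz ww, B2 zz /\ A2 ww /\ zz != 0 /\ ww != 0 /\
    enorm zz < e /\ enorm ww < e /\ enorm (dirv zz - c) < e /\ enorm (dirv ww - c) < e.
  move=> e e0.
  have [sg [sg0 [sg1 sg2]]] := small_pos (divr_gt0 s0 (ltr0Sn R 1))
       (divr_gt0 e0 (mulr_gt0 (ltr0Sn R 1) K20)).
  have [tau [tau0 [tau1 tau2]]] := small_pos (divr_gt0 (ltr01 : (0:R) < 1) (ltr0Sn R 1))
       (divr_gt0 (mulr_gt0 e0 K10) (mulr_gt0 (ltr0Sn R 3) K20)).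
  have [N1 HN1] := y0 sg sg0.
  have [N2 HN2] := rho tau tau0.
  have [m [Nm Hm]] := Hc' (e/2) (divr_gt0 e0 (ltr0Sn R 1)) (maxn N1 N2).
  have ym := HN1 m (leq_trans (leq_maxl _ _) Nm); rewrite subr0 in ym.
  have rm := HN2 m (leq_trans (leq_maxr _ _) Nm).
  have Yp : 0 < enorm (y m) := enorm_gt0 (proj2 (yB m)).
  have ys : enorm (y m) < s.
    apply: (lt_le_trans ym); apply: (le_trans sg1); rewrite ler_pdivrMr ?ltr0Sn //; lra.
  have [B2Z PZ] := Hz m ys.
  rewrite ger0_norm ?divr_ge0 ?enorm_ge0 // ltr_pdivrMr // in rm.
  have hB : enorm (b m) <= enorm (y m) + enorm (y m - b m).
    have := enormD (y m) (b m - y m); rewrite addrC subrK.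
    by rewrite enormB_sym.
  have tau1' : tau <= 1/2 by [].
  have bs : enorm (b m) < s.
    have : enorm (b m) < 2 * sg by nra.
    move=> H; apply: (lt_le_trans H); move: sg1; rewrite ler_pdivlMr ?ltr0Sn //.
    by rewrite mulrC.
  have [W [A2W PW]] := HA _ (bA m) bs.
  have b0 : b m != 0.
    apply/eqP => b0; rewrite b0 subr0 in rm; nra.
  have Bp : 0 < enorm (b m) := enorm_gt0 b0.
  have [z1 z2] := bnd _ _ PZ.
  have [w1 w2] := bnd _ _ PW.
  have [d1 d2] := HP _ _ _ _ PZ PW.
  have Zp : 0 < enorm (z m) by nra.
  have Wp : 0 < enorm W by nra.
  have Z0 : z m != 0 by apply/eqP => Z0; rewrite Z0 enorm0 ltxx in Zp.
  have W0 : W != 0 by apply/eqP => W0; rewrite W0 enorm0 ltxx in Wp.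
  have F1 : K2 * (e / (2 * K2)) = e / 2 by field; rewrite gt_eqF.
  have F2 : K2 * (e * K1 / (4 * K2)) = e * K1 / 4 by field; rewrite gt_eqF.
  have sgK : K2 * sg <= e / 2 by rewrite -F1 ler_wpM2l // ltW.
  have tauK : K2 * tau <= e * K1 / 4 by rewrite -F2 ler_wpM2l // ltW.
  exists (z m), W; do 4 (split => //).
  split; first by nra.
  split; first by nra.
  split; first by apply: lt_trans Hm _; lra.
  have tri := enormD (dirv W - dirv (z m)) (dirv (z m) - c).
  rewrite addrA subrK in tri.
  have dd := dirv_diff W Z0.
  have : 2 * enorm (W - z m) / enorm (z m) <= e / 2.
    rewrite ler_pdivrMr // enormB_sym.
    have : enorm (z m - W) <= K2 * tau * enorm (y m) by nra.
    nra.
  lra.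
have c1 : enorm c = 1.
  apply/esym/lim_eq => e e0.
  have [zz [_ [_ [_ [Z0 [_ [_ [_ [h _]]]]]]]]] := key e e0.
  apply: le_lt_trans h; rewrite -(enorm_dirv Z0); exact: enorm_rev.
exists c; split; apply: dirset_of => // e e0.
  by have [zz [ww [_ [? [_ [? [_ [? [_ ?]]]]]]]]] := key e e0; exists ww.
by have [zz [ww [? [_ [? [_ [? [_ [? _]]]]]]]]] := key e e0; exists zz.
Qed.

End Main.

Unset Implicit Arguments.
Theorem theorem3p5 (R : realType) (n : nat) (A B : set 'rV[R]_n)
  (h : 'rV[R]_n -> 'rV[R]_n) (r : R) :
  zero_in_closure A -> zero_in_closure B ->
  biLipschitz_germ h r ->
  (SSP A \/ SSP B) ->
  (SSP (germ_image h r A) \/ SSP (germ_image h r B)) ->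
  (weakly_transverse A B <->
   weakly_transverse (germ_image h r A) (germ_image h r B)).
Proof.
move=> _ _ [r0 [h0 [[K1 [K2 [K10 [K12 HK]]]] _]]] sspAB sspH.
have K20 : 0 < K2 by apply: lt_le_trans K12.
have wtE : forall X Y : set 'rV[R]_n,
    weakly_transverse X Y <-> ~ exists d, dirset X d /\ dirset Y d.
  move=> X Y; split.
    by move=> E [d [dX dY]]; have : (dirset X `&` dirset Y) d by []; rewrite E.
  move=> H; rewrite /weakly_transverse predeqE => d; split => // -[dX dY]; apply: H; by exists d.
have P00 : enorm (0 : 'rV[R]_n) < r /\ 0 = h 0 by rewrite enorm0 h0.
have fwd : forall X Y, (SSP X \/ SSP Y) ->
    (exists d, dirset X d /\ dirset Y d) ->
    exists c, dirset (germ_image h r X) c /\ dirset (germ_image h r Y) c.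
  move=> X0 Y0 [ssp|ssp] [d [dX dY]].
    apply: (@transfer R n X0 Y0 _ _ (fun x z => enorm x < r /\ z = h x) K1 K2 r
              K10 K20 r0 P00 _ _ _ ssp); last by exists d.
    - by move=> x y z w [xr ->] [yr ->]; exact: HK.
    - by move=> x Xx xr; exists (h x); split => //; exists x.
    - by move=> x Xx xr; exists (h x); split => //; exists x.
  have [c [c1 c2]] : exists c, dirset (germ_image h r Y0) c /\ dirset (germ_image h r X0) c.
    apply: (@transfer R n Y0 X0 _ _ (fun x z => enorm x < r /\ z = h x) K1 K2 r
              K10 K20 r0 P00 _ _ _ ssp); last by exists d.
    - by move=> x y z w [xr ->] [yr ->]; exact: HK.
    - by move=> x Xx xr; exists (h x); split => //; exists x.
    - by move=> x Xx xr; exists (h x); split => //; exists x.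
  by exists c.
have bwd : forall X Y : set 'rV[R]_n,
    (SSP (germ_image h r X) \/ SSP (germ_image h r Y)) ->
    (exists c, dirset (germ_image h r X) c /\ dirset (germ_image h r Y) c) ->
    exists d, dirset X d /\ dirset Y d.
  have HP : forall z w x y, (enorm x < r /\ z = h x) -> (enorm y < r /\ w = h y) ->
      K2^-1 * enorm (z - w) <= enorm (x - y) /\ enorm (x - y) <= K1^-1 * enorm (z - w).
    move=> z w x y [xr ->] [yr ->]; have [h1 h2] := HK x y xr yr.
    by rewrite ler_pdivrMl // ler_pdivlMl.
  have Ki1 : 0 < K2^-1 by rewrite invr_gt0.
  have Ki2 : 0 < K1^-1 by rewrite invr_gt0.
  have HI : forall Z : set 'rV[R]_n, forall z, germ_image h r Z z -> enorm z < 1 ->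
      exists x, Z x /\ (enorm x < r /\ z = h x).
    by move=> Z z [x [Zx xr] <-] _; exists x.
  move=> X0 Y0 [ssp|ssp] [d [dX dY]].
    apply: (@transfer R n _ _ X0 Y0 (fun z x => enorm x < r /\ z = h x) _ _ 1
              Ki1 Ki2 ltr01 P00 HP (HI X0) (HI Y0) ssp); by exists d.
  have [c [c1 c2]] : exists c, dirset Y0 c /\ dirset X0 c.
    apply: (@transfer R n _ _ Y0 X0 (fun z x => enorm x < r /\ z = h x) _ _ 1
              Ki1 Ki2 ltr01 P00 HP (HI Y0) (HI X0) ssp); by exists d.
  by exists c.
rewrite !wtE; split=> H1 H2; apply: H1; [exact: bwd sspH H2 | exact: fwd sspAB H2].
Qed.
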